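(* For $i\in\mathbb N$ and $j\in\mathbb N$ define $$l_{i,j}=\sum_{k=0}^{i-j}\binom{\frac{i-1}{2}+x-k}{k}\binom{\frac{i-1}{2}+k-x}{i-j-k}$$ (a quantity independent of $x$; equal to $0$ when $j>i$, as an empty sum). Then $l_{i,0}=(-1)^i$ and $l_{i,i}=1$ for all $i\in\mathbb N$, and $l_{i,j}=l_{i-1,j-1}+l_{i-1,j}$ for all $i\ge1$ and $1\le j\le i$.
   Context: For $z\in\mathbb C$ and $k\in\mathbb N$, $\binom{z}{k}=\frac{z(z-1)\cdots(z-k+1)}{k!}$. The sum defining $l_{i,j}$ is a polynomial in $x$ which is constant in $x$, so $l_{i,j}$ is a well-defined number (e.g. its value at $x=0$). *)

(* Defs.v *)
From mathcomp Require Import all_boot all_order all_algebra.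
Set Implicit Arguments. Unset Strict Implicit. Unset Printing Implicit Defensive.
Import Order.TTheory GRing.Theory Num.Theory.
Local Open Scope ring_scope.

Definition gbinom (R : numFieldType) (z : R) (k : nat) : R :=
  (\prod_(m < k) (z - m%:R)) / (k`!)%:R.

Definition lcoef (R : numFieldType) (i j : nat) (x : R) : R :=
  if (j <= i)%N then
    \sum_(0 <= k < (i - j).+1)
      gbinom ((i%:R - 1) / 2 + x - k%:R) k *
      gbinom ((i%:R - 1) / 2 + k%:R - x) (i - j - k)
  else 0.

(* Main.v *)
Require Import Defs.
From mathcomp Require Import all_boot all_order all_algebra.
From mathcomp Require Import ring.
Set Implicit Arguments. Unset Strict Implicit. Unset Printing Implicit Defensive.
Import Order.TTheory GRing.Theory Num.Theory.
Local Open Scope ring_scope.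

Lemma fact_neq0 (R : numFieldType) k : (k`!)%:R != 0 :> R.
Proof. by rewrite pnatr_eq0 -lt0n fact_gt0. Qed.

Lemma gbinom0 (R : numFieldType) (z : R) : gbinom z 0 = 1.
Proof. by rewrite /gbinom big_ord0 fact0 divr1. Qed.

Lemma gbinomS (R : numFieldType) (z : R) m :
  gbinom z m.+1 = gbinom (z - 1) m.+1 + gbinom (z - 1) m.
Proof.
rewrite /gbinom big_ord_recl big_ord_recr /=.
have -> : \prod_(i < m) (z - (lift ord0 i)%:R) = \prod_(i < m) (z - 1 - i%:R).
  by apply: eq_bigr => t _; rewrite lift0 mulrS opprD addrA.
set P := \prod_(i < m) _.
rewrite factS natrM.
have h1 := fact_neq0 R m.
have h2 : (m.+1)%:R != 0 :> R by rewrite pnatr_eq0.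
rewrite mulrS.
field.
by rewrite h1 -mulrS.
Qed.

Definition S (R : numFieldType) (a b : R) n :=
  \sum_(k < n.+1) gbinom (a - k%:R) k * gbinom (b + k%:R) (n - k).

Lemma S0 (R : numFieldType) (a b : R) : S a b 0 = 1.
Proof. by rewrite /S big_ord1 /= !gbinom0 mulr1. Qed.

Lemma S_R1 (R : numFieldType) (a b : R) n :
  S a b n.+1 = S a (b - 1) n.+1 + S a (b - 1) n.
Proof.
rewrite /S big_ord_recr /= [in X in _ = X + _]big_ord_recr /= subnn !gbinom0.
rewrite addrAC; congr (_ + _); rewrite -big_split /=.
apply: eq_bigr => k _; rewrite subSn; last by rewrite -ltnS.
rewrite gbinomS mulrDr; congr (_ * gbinom _ _ + _ * gbinom _ _); ring.
Qed.

Lemma S_R2 (R : numFieldType) (a b : R) n :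
  S a b n.+1 = S (a - 1) b n.+1 + S (a - 2) (b + 1) n.
Proof.
rewrite /S big_ord_recl [X in _ = X + _]big_ord_recl /= !subr0 !gbinom0 !mul1r.
rewrite -addrA; congr (_ + _); rewrite -big_split /=.
apply: eq_bigr => k _; rewrite /bump leq0n add1n subSS.
rewrite gbinomS mulrDl; congr (gbinom _ _ * gbinom _ _ + gbinom _ _ * gbinom _ _);
  rewrite mulrS; ring.
Qed.

Lemma S_shift (R : numFieldType) n (a b : R) : S a b n = S (a - 1) (b + 1) n.
Proof.
elim: n a b => [|n IH] a b; first by rewrite !S0.
rewrite (S_R2 a b n) (S_R1 (a - 1) (b + 1) n) addrK (IH (a - 1) b).
by have -> : a - 1 - 1 = a - 2 by ring.
Qed.

Definition gbinomP (R : numFieldType) (p : {poly R}) k : {poly R} :=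
  (\prod_(m < k) (p - (m%:R)%:P)) * ((k`!)%:R^-1)%:P.

Lemma horner_gbinomP (R : numFieldType) (p : {poly R}) k x :
  (gbinomP p k).[x] = gbinom p.[x] k.
Proof.
rewrite /gbinomP /gbinom hornerM hornerC horner_prod; congr (_ * _).
by apply: eq_bigr => m _; rewrite hornerD hornerN hornerC.
Qed.

Definition SP (R : numFieldType) (c : R) n : {poly R} :=
  \sum_(k < n.+1) gbinomP (c%:P + 'X - (k%:R)%:P) k *
                  gbinomP (c%:P - 'X + (k%:R)%:P) (n - k).

Lemma SPE (R : numFieldType) (c : R) n x : (SP c n).[x] = S (c + x) (c - x) n.
Proof.
rewrite /SP /S horner_sum; apply: eq_bigr => k _.
by rewrite hornerM !horner_gbinomP !(hornerD, hornerN, hornerX, hornerC).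
Qed.

Lemma S_const (R : numFieldType) (c : R) n x y :
  S (c + x) (c - x) n = S (c + y) (c - y) n.
Proof.
suff H : forall z, (SP c n).[z] = (SP c n).[0].
  by rewrite -!SPE !H.
set Q := SP c n - ((SP c n).[0])%:P.
have sh : forall z, (SP c n).[z] = (SP c n).[z - 1].
  move=> z; rewrite !SPE S_shift; congr S; ring.
have rootQ : forall m : nat, root Q (- m%:R).
  move=> m; rewrite /root /Q hornerD hornerN hornerC subr_eq0; apply/eqP.
  elim: m => [|m IH]; first by rewrite oppr0.
  by rewrite -IH (sh (- m%:R)) mulrS opprD addrC.
have Q0 : Q = 0.
  apply/eqP; apply/negPn/negP => nz.
  suff : (size (map (fun m : nat => - (m%:R) : R) (iota 0 (size Q))) < size Q)%N.
    by rewrite size_map size_iota ltnn.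
  apply: max_poly_roots nz _ _.
    by apply/allP => z /mapP [m _ ->].
  rewrite map_inj_uniq ?iota_uniq // => m1 m2 /oppr_inj /eqP.
  by rewrite eqr_nat => /eqP.
move=> z; have : Q.[z] = 0 by rewrite Q0 horner0.
by rewrite /Q hornerD hornerN hornerC => /eqP; rewrite subr_eq0 => /eqP.
Qed.

Lemma lcoefE (R : numFieldType) i j (x : R) : (j <= i)%N ->
  lcoef i j x = S ((i%:R - 1) / 2 + x) ((i%:R - 1) / 2 - x) (i - j).
Proof.
move=> hji; rewrite /lcoef hji big_mkord; apply: eq_bigr => k _.
by rewrite [_ + k%:R - x]addrAC.
Qed.

Lemma lcoef_const (R : numFieldType) i j (x y : R) : lcoef i j x = lcoef i j y.
Proof.
case: (leqP j i) => h; first by rewrite !lcoefE // (S_const _ _ x y).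
by rewrite /lcoef leqNgt h.
Qed.

Lemma gbinom_nat0 (R : numFieldType) m k : (m < k)%N -> gbinom (m%:R : R) k = 0.
Proof.
move=> h; rewrite /gbinom (bigD1 (Ordinal h)) //= subrr mul0r mul0r //.
Qed.

Lemma gbinom_m1 (R : numFieldType) k : gbinom (-1 : R) k = (-1) ^+ k.
Proof.
have H : \prod_(t < k) (-1 - t%:R) = (-1) ^+ k * (k`!)%:R :> R.
  elim: k => [|k IH]; first by rewrite big_ord0 fact0 mulr1.
  rewrite big_ord_recr /= IH factS natrM exprS mulrS; ring.
by rewrite /gbinom H mulfK // fact_neq0.
Qed.

Lemma S_special (R : numFieldType) i : S (i%:R : R) (-1) i = (-1) ^+ i.
Proof.
rewrite /S big_ord_recl /= subr0 addr0 gbinom0 mul1r subn0 gbinom_m1 big1 ?addr0 //.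
move=> k _; rewrite /bump leq0n add1n.
have hk : (k.+1 <= i)%N by [].
have -> : -1 + (k.+1)%:R = k%:R :> R by rewrite mulrS addKr.
rewrite -natrB //.
case: (ltnP (i - k.+1) k.+1) => h; first by rewrite (gbinom_nat0 _ h) mul0r.
by rewrite (gbinom_nat0 _ h) mulr0.
Qed.

Lemma lcoef_diag (R : numFieldType) i (x : R) : lcoef i i x = 1.
Proof. by rewrite lcoefE // subnn S0. Qed.

Theorem proposition4p4 (R : numFieldType) (x : R) :
  (forall i : nat, lcoef i 0 x = (-1) ^+ i) /\
  (forall i : nat, lcoef i i x = 1) /\
  (forall i j : nat, (1 <= i)%N -> (1 <= j)%N -> (j <= i)%N ->
     lcoef i j x = lcoef i.-1 j.-1 x + lcoef i.-1 j x).
Proof.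
have two : (2 : R) != 0 by rewrite pnatr_eq0.
split; [|split; first by move=> i; apply: lcoef_diag].
  move=> i; rewrite (lcoef_const i 0 x ((i%:R + 1) / 2)) lcoefE // subn0.
  have -> : (i%:R - 1) / 2 + (i%:R + 1) / 2 = i%:R :> R by field.
  have -> : (i%:R - 1) / 2 - (i%:R + 1) / 2 = -1 :> R by field.
  exact: S_special.
case=> [//|i] [//|j] _ _; rewrite ltnS /= => hji.
have [->|hne] := eqVneq j i.
  by rewrite !lcoef_diag /lcoef ltnn addr0.
have hlt : (j < i)%N by rewrite ltn_neqAle hne hji.
rewrite (lcoef_const i j x (x + 1/2)) (lcoef_const i j.+1 x (x + 1/2)).
rewrite !lcoefE // ?subSS -(subnSK hlt) S_R1.
congr (S _ _ _ + S _ _ _); rewrite -addn1 natrD; field; by [].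
Qed.
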